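(* Let $\vec a\in\mathbb R^4\setminus\{0\}$, let $V(p)=\vec a+\langle\vec a,p\rangle p$ on $\mathbb H^3$, let $q\neq0$, and let $\gamma\colon I\to\mathbb H^3$ be a non-geodesic curve parametrized by arc-length which is a conformal trajectory of $V$ with torsion identically zero. Then $\langle\vec a,\gamma(s)\rangle=0$ for all $s\in I$ and $\vec a$ is space-like, i.e. $\langle\vec a,\vec a\rangle>0$.
   Context: $\mathbb R^4$ carries the Lorentzian metric $\langle\cdot,\cdot\rangle=dx^2+dy^2+dz^2-dt^2$ and $\mathbb H^3=\{p\in\mathbb R^4:\langle p,p\rangle=-1,\ t>0\}$ with the induced metric and Levi-Civita connection $\nabla$. The cross product of $u,v\in T_p\mathbb H^3$ is the unique $u\times v\in T_p\mathbb H^3$ with $\langle u\times v,w\rangle=\det(u,v,w,p)$ for all $w\in T_p\mathbb H^3$. For a fixed real $q\neq0$, a conformal trajectory of $V$ is a regular curve with $\nabla_{\gamma'}\gamma'=q\,V\times\gamma'$. Torsion is defined by the Frenet frame $T=\gamma'$, $\nabla_TT=\kappa N$ ($\kappa>0$), $B=T\times N$, $\nabla_TN=-\kappa T+\tau B$, $\nabla_TB=-\tau N$. *)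

(* Defs.v *)
From Stdlib Require Import Reals.
From Coquelicot Require Import Coquelicot.
Open Scope R_scope.

Record vec4 : Type := V4 { vx : R; vy : R; vz : R; vt : R }.

Definition vadd (u v : vec4) : vec4 :=
  V4 (vx u + vx v) (vy u + vy v) (vz u + vz v) (vt u + vt v).
Definition vscal (c : R) (u : vec4) : vec4 :=
  V4 (c * vx u) (c * vy u) (c * vz u) (c * vt u).

Definition lor (u v : vec4) : R :=
  vx u * vx v + vy u * vy v + vz u * vz v - vt u * vt v.

Definition inH3 (p : vec4) : Prop := lor p p = -1 /\ vt p > 0.

Definition det3 (a1 a2 a3 b1 b2 b3 c1 c2 c3 : R) : R :=
  a1 * (b2 * c3 - b3 * c2) - a2 * (b1 * c3 - b3 * c1) + a3 * (b1 * c2 - b2 * c1).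

Definition det4 (u v w p : vec4) : R :=
    vx u * det3 (vy v) (vz v) (vt v) (vy w) (vz w) (vt w) (vy p) (vz p) (vt p)
  - vy u * det3 (vx v) (vz v) (vt v) (vx w) (vz w) (vt w) (vx p) (vz p) (vt p)
  + vz u * det3 (vx v) (vy v) (vt v) (vx w) (vy w) (vt w) (vx p) (vy p) (vt p)
  - vt u * det3 (vx v) (vy v) (vz v) (vx w) (vy w) (vz w) (vx p) (vy p) (vz p).

Definition e1 := V4 1 0 0 0.
Definition e2 := V4 0 1 0 0.
Definition e3 := V4 0 0 1 0.
Definition e4 := V4 0 0 0 1.

(* Cross product in T_p H^3: the vector X with lor X w = det4 u v w p for
   every w in R^4 (in particular for every w in T_p H^3); X is automatically
   tangent since det4 u v p p = 0, hence it is the unique such vector of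
   T_p H^3. *)
Definition cross (p u v : vec4) : vec4 :=
  V4 (det4 u v e1 p) (det4 u v e2 p) (det4 u v e3 p) (- det4 u v e4 p).

Definition dv (f : R -> vec4) (s : R) : vec4 :=
  V4 (Derive (fun r => vx (f r)) s) (Derive (fun r => vy (f r)) s)
     (Derive (fun r => vz (f r)) s) (Derive (fun r => vt (f r)) s).

Definition smooth_at (f : R -> vec4) (s : R) : Prop :=
  forall n : nat,
    ex_derive_n (fun r => vx (f r)) n s /\ ex_derive_n (fun r => vy (f r)) n s /\
    ex_derive_n (fun r => vz (f r)) n s /\ ex_derive_n (fun r => vt (f r)) n s.

(* Levi-Civita covariant derivative in H^3 along the curve gamma of a vector
   field X along gamma: tangential projection of the ambient derivative. *)
Definition covD (gamma X : R -> vec4) (s : R) : vec4 :=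
  vadd (dv X s) (vscal (lor (dv X s) (gamma s)) (gamma s)).

Definition Vfield (a p : vec4) : vec4 := vadd a (vscal (lor a p) p).

Definition tangentT (gamma : R -> vec4) : R -> vec4 := dv gamma.
Definition curvature (gamma : R -> vec4) (s : R) : R :=
  sqrt (lor (covD gamma (tangentT gamma) s) (covD gamma (tangentT gamma) s)).
Definition normalN (gamma : R -> vec4) (s : R) : vec4 :=
  vscal (/ curvature gamma s) (covD gamma (tangentT gamma) s).
Definition binormalB (gamma : R -> vec4) (s : R) : vec4 :=
  cross (gamma s) (tangentT gamma s) (normalN gamma s).
(* From nabla_T N = -kappa T + tau B, tau = <nabla_T N, B> (as <B,B>=1, <T,B>=0). *)
Definition torsion (gamma : R -> vec4) (s : R) : R :=
  lor (covD gamma (normalN gamma) s) (binormalB gamma s).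

Definition in_Iv (lo hi : Rbar) (s : R) : Prop := Rbar_lt lo s /\ Rbar_lt s hi.

Definition conformal_trajectory (q : R) (a : vec4) (gamma : R -> vec4)
  (lo hi : Rbar) : Prop :=
  forall s, in_Iv lo hi s ->
    covD gamma (tangentT gamma) s =
    vscal q (cross (gamma s) (Vfield a (gamma s)) (tangentT gamma s)).

(* Main.v *)
Require Import Defs.
From Stdlib Require Import Reals Lra Psatz.
From Coquelicot Require Import Coquelicot.
Open Scope R_scope.

Definition difv (u : R -> vec4) s := ex_derive (fun r => vx (u r)) s /\ ex_derive (fun r => vy (u r)) s /\ ex_derive (fun r => vz (u r)) s /\ ex_derive (fun r => vt (u r)) s.

Lemma isd_mult f g x df dg : is_derive f x df -> is_derive g x dg -> is_derive (fun t => f t * g t) x (df * g x + f x * dg).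
Proof. intros. apply (is_derive_mult f g); auto. intros; apply Rmult_comm. Qed.
Lemma isd_plus f g x df dg : is_derive f x df -> is_derive g x dg -> is_derive (fun t => f t + g t) x (df + dg).
Proof. intros. apply (is_derive_plus f g); auto. Qed.
Lemma isd_minus f g x df dg : is_derive f x df -> is_derive g x dg -> is_derive (fun t => f t - g t) x (df - dg).
Proof. intros. apply (is_derive_minus f g); auto. Qed.
Lemma isd_eq (f : R -> R) (x l l' : R) : is_derive f x l -> l = l' -> is_derive f x l'.
Proof. intros; subst; auto. Qed.

Lemma isd_lor u v s : difv u s -> difv v s ->
  is_derive (fun r => lor (u r) (v r)) s (lor (dv u s) (v s) + lor (u s) (dv v s)).
Proof.
intros [ux [uy [uz ut]]] [vx' [vy' [vz' vt']]].
eapply isd_eq.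
{ unfold lor. apply isd_minus; [apply isd_plus; [apply isd_plus|]|]; apply isd_mult; apply Derive_correct; assumption. }
unfold lor, dv; simpl; ring.
Qed.

Lemma exd_plus (f g : R -> R) x : ex_derive f x -> ex_derive g x -> ex_derive (fun t => f t + g t) x.
Proof. intros. eexists. apply isd_plus; apply Derive_correct; auto. Qed.
Lemma exd_mult (f g : R -> R) x : ex_derive f x -> ex_derive g x -> ex_derive (fun t => f t * g t) x.
Proof. intros. eexists. apply isd_mult; apply Derive_correct; auto. Qed.

Lemma exd_lor u v s : difv u s -> difv v s -> ex_derive (fun r => lor (u r) (v r)) s.
Proof. intros; eexists; apply isd_lor; auto. Qed.

Lemma difv_add u v s : difv u s -> difv v s -> difv (fun r => vadd (u r) (v r)) s.
Proof. intros [? [? [? ?]]] [? [? [? ?]]]; repeat split; simpl; apply exd_plus; auto. Qed.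
Lemma dv_add u v s : difv u s -> difv v s -> dv (fun r => vadd (u r) (v r)) s = vadd (dv u s) (dv v s).
Proof. intros [? [? [? ?]]] [? [? [? ?]]]; unfold dv, vadd; simpl; f_equal; apply Derive_plus; auto. Qed.
Lemma difv_scal c u s : ex_derive c s -> difv u s -> difv (fun r => vscal (c r) (u r)) s.
Proof. intros ? [? [? [? ?]]]; repeat split; simpl; apply exd_mult; auto. Qed.
Lemma dv_scal c u s : ex_derive c s -> difv u s ->
  dv (fun r => vscal (c r) (u r)) s = vadd (vscal (Derive c s) (u s)) (vscal (c s) (dv u s)).
Proof. intros ? [? [? [? ?]]]; unfold dv, vadd, vscal; simpl; f_equal; rewrite Derive_mult; auto; ring. Qed.
Lemma difv_const a s : difv (fun _ => a) s.
Proof. repeat split; apply ex_derive_const. Qed.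
Lemma dv_const a s : dv (fun _ => a) s = V4 0 0 0 0.
Proof. unfold dv; simpl; rewrite !Derive_const; auto. Qed.

Lemma locI lo hi s : in_Iv lo hi s -> locally s (in_Iv lo hi).
Proof. intros H. apply (open_and _ _ (open_Rbar_gt lo) (open_Rbar_lt hi)). exact H. Qed.

Lemma dzero lo hi (phi : R -> R) c s d : in_Iv lo hi s -> (forall r, in_Iv lo hi r -> phi r = c) -> is_derive phi s d -> d = 0.
Proof.
intros Hs Hc Hd.
assert (H : is_derive (fun _ => c) s d).
{ apply is_derive_ext_loc with phi; auto. eapply filter_imp; [|apply (locI lo hi s Hs)]. intros; simpl; auto. }
apply is_derive_unique in H. rewrite <- H. apply Derive_const.
Qed.
Definition det4r (a11 a12 a13 a14 a21 a22 a23 a24 a31 a32 a33 a34 a41 a42 a43 a44 : R) : R :=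
  det4 (V4 a11 a12 a13 a14) (V4 a21 a22 a23 a24) (V4 a31 a32 a33 a34) (V4 a41 a42 a43 a44).
Lemma gram u1 u2 u3 u4 v1 v2 v3 v4 :
  det4 u1 u2 u3 u4 * det4 v1 v2 v3 v4 = - det4r
   (lor u1 v1) (lor u1 v2) (lor u1 v3) (lor u1 v4)
   (lor u2 v1) (lor u2 v2) (lor u2 v3) (lor u2 v4)
   (lor u3 v1) (lor u3 v2) (lor u3 v3) (lor u3 v4)
   (lor u4 v1) (lor u4 v2) (lor u4 v3) (lor u4 v4).
Proof.
destruct u1, u2, u3, u4, v1, v2, v3, v4. unfold det4r, det4, det3, lor; simpl. ring.
Qed.
Lemma lor_sym u v : lor u v = lor v u.
Proof. destruct u, v; unfold lor; simpl; ring. Qed.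

Lemma step_h g T A A' a: lor g g = -1 -> lor T T = 1 -> lor g T = 0 -> lor A g = 0 -> lor A T = 0 -> lor A a = 0 -> lor A' T = - lor A A -> lor A' a = 0 -> lor A' g = 0 -> lor A A > 0 -> det4 T A A' g = 0 -> lor T a = 0.
Proof.
intros Hgg HTT HgT HAg HAT HAa HA'T HA'a HA'g HK Hd.
pose proof (gram T A A' g T A a g) as G. rewrite Hd, Rmult_0_l in G.
rewrite (lor_sym T A), (lor_sym T g), (lor_sym g A) in G.
rewrite Hgg, HTT, HgT, HAg, HAT, HAa, HA'T, HA'a, HA'g in G.
unfold det4r, det4, det3 in G; simpl in G.
set (K := lor A A) in *. set (h := lor T a) in *.
assert (h * (K*K) = 0) by lra. 
destruct (Rmult_integral _ _ H) as [|H2]; auto. nra.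
Qed.

Lemma cross_lor p u v w : lor (cross p u v) w = det4 u v w p.
Proof. destruct p, u, v, w; unfold lor, cross, det4, det3, e1, e2, e3, e4; simpl; ring. Qed.

Lemma final_alg a p v q: lor p p = -1 -> lor v v = 1 -> lor p v = 0 -> lor a v = 0 -> lor a p = 0 ->
  lor (vscal q (cross p (Vfield a p) v)) (vscal q (cross p (Vfield a p) v)) > 0 -> lor a a > 0.
Proof.
intros Hpp Hvv Hpv Hav Hap Hpos.
set (C := cross p (Vfield a p) v) in *.
assert (E : lor (vscal q C) (vscal q C) = q*q*lor C C) by (destruct C; unfold lor, vscal; simpl; ring).
rewrite E in Hpos.
assert (L1 : lor C C = det4 a v C p).
{ unfold C at 1. rewrite cross_lor. destruct a, p, v, C; unfold det4, det3, Vfield, vadd, vscal, lor; simpl; ring. }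
assert (L2 : forall w, lor C w = det4 (Vfield a p) v w p) by (intros; unfold C; apply cross_lor).
assert (Ca : lor C a = 0) by (rewrite L2; destruct a, p, v; unfold det4, det3, Vfield, vadd, vscal, lor; simpl; ring).
assert (Cv : lor C v = 0) by (rewrite L2; destruct a, p, v; unfold det4, det3, Vfield, vadd, vscal, lor; simpl; ring).
assert (Cp : lor C p = 0) by (rewrite L2; destruct a, p, v; unfold det4, det3, Vfield, vadd, vscal, lor; simpl; ring).
pose proof (gram a v C p a v C p) as G. rewrite <- L1 in G.
rewrite (lor_sym v a), (lor_sym a C), (lor_sym v C), (lor_sym p a), (lor_sym p C) in G.
rewrite Hpp, Hvv, Hpv, Hav, Hap, Ca, Cv, Cp in G.
unfold det4r, det4, det3 in G; simpl in G.
set (D := lor C C) in *. set (al := lor a a) in *.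
assert (D > 0). { destruct (Rlt_dec 0 D); auto. nra. }
assert (D * (D - al) = 0) by lra.
destruct (Rmult_integral _ _ H0); nra.
Qed.

Lemma lor_vas x c y z : lor (vadd x (vscal c y)) z = lor x z + c * lor y z.
Proof. destruct x, y, z; unfold lor, vadd, vscal; simpl; ring. Qed.
Lemma lor_avs z x c y : lor z (vadd x (vscal c y)) = lor z x + c * lor z y.
Proof. destruct x, y, z; unfold lor, vadd, vscal; simpl; ring. Qed.
Lemma lor_zero x : lor x (V4 0 0 0 0) = 0.
Proof. destruct x; unfold lor; simpl; ring. Qed.
Lemma conf_a q p a v : lor (vscal q (cross p (Vfield a p) v)) a = 0.
Proof. destruct p, a, v; unfold lor, vscal, cross, Vfield, vadd, det4, det3, e1, e2, e3, e4; simpl; ring. Qed.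
Lemma tors_id c k m A A' g T :
  lor (vadd (vadd (vscal c A) (vscal k A')) (vscal m g)) (cross g T (vscal k A)) = k*k*det4 T A A' g.
Proof. destruct A, A', g, T; unfold lor, vscal, cross, vadd, det4, det3, e1, e2, e3, e4; simpl; ring. Qed.
Lemma exists_in lo hi : Rbar_lt lo hi -> exists s, in_Iv lo hi s.
Proof.
destruct lo as [l| |], hi as [h| |]; simpl; intros H; try contradiction.
- exists ((l+h)/2); split; simpl; lra.
- exists (l+1); split; simpl; auto; lra.
- exists (h-1); split; simpl; auto; lra.
- exists 0; split; simpl; auto.
Qed.

Theorem mainTheorem10 (a : vec4) (q : R) (gamma : R -> vec4) (lo hi : Rbar) :
  a <> V4 0 0 0 0 ->
  q <> 0 ->
  Rbar_lt lo hi ->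
  (forall s, in_Iv lo hi s -> smooth_at gamma s) ->
  (forall s, in_Iv lo hi s -> inH3 (gamma s)) ->
  (forall s, in_Iv lo hi s -> lor (tangentT gamma s) (tangentT gamma s) = 1) ->
  (forall s, in_Iv lo hi s -> curvature gamma s > 0) ->
  conformal_trajectory q a gamma lo hi ->
  (forall s, in_Iv lo hi s -> torsion gamma s = 0) ->
  (forall s, in_Iv lo hi s -> lor a (gamma s) = 0) /\ lor a a > 0.
Proof.
intros Ha Hq Hlohi Hsm HH3 Hunit Hcurv Hconf Htors.
unfold conformal_trajectory in Hconf. unfold tangentT in Hunit, Hconf.
assert (D1 : forall r, in_Iv lo hi r -> difv gamma r).
{ intros r Hr; destruct (Hsm r Hr 1%nat) as [h1 [h2 [h3 h4]]].
  split; [exact h1|split;[exact h2|split;[exact h3|exact h4]]]. }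
assert (D2 : forall r, in_Iv lo hi r -> difv (dv gamma) r).
{ intros r Hr; destruct (Hsm r Hr 2%nat) as [h1 [h2 [h3 h4]]].
  split; [exact h1|split;[exact h2|split;[exact h3|exact h4]]]. }
assert (D3 : forall r, in_Iv lo hi r -> difv (dv (dv gamma)) r).
{ intros r Hr; destruct (Hsm r Hr 3%nat) as [h1 [h2 [h3 h4]]].
  split; [exact h1|split;[exact h2|split;[exact h3|exact h4]]]. }
assert (DA : forall r, in_Iv lo hi r -> difv (covD gamma (dv gamma)) r).
{ intros r Hr. unfold covD. apply difv_add; [apply D3; auto|].
  apply difv_scal; [apply exd_lor; auto|]. apply D1; auto. }
assert (E0 : forall r, in_Iv lo hi r -> lor (gamma r) (gamma r) = -1).
{ intros r Hr; apply HH3; auto. }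
assert (E1 : forall r, in_Iv lo hi r -> lor (gamma r) (dv gamma r) = 0).
{ intros r Hr. pose proof (dzero lo hi (fun r => lor (gamma r) (gamma r)) (-1) r _ Hr E0
     (isd_lor gamma gamma r (D1 r Hr) (D1 r Hr))) as H.
  rewrite (lor_sym (dv gamma r)) in H. lra. }
assert (E2 : forall r, in_Iv lo hi r -> lor (dv gamma r) (dv (dv gamma) r) = 0).
{ intros r Hr. pose proof (dzero lo hi (fun r => lor (dv gamma r) (dv gamma r)) 1 r _ Hr Hunit
     (isd_lor _ _ r (D2 r Hr) (D2 r Hr))) as H.
  rewrite (lor_sym (dv (dv gamma) r)) in H. lra. }
assert (E3 : forall r, in_Iv lo hi r -> lor (gamma r) (dv (dv gamma) r) = -1).
{ intros r Hr. pose proof (dzero lo hi (fun r => lor (gamma r) (dv gamma r)) 0 r _ Hr E1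
     (isd_lor _ _ r (D1 r Hr) (D2 r Hr))) as H.
  rewrite (Hunit r Hr) in H. lra. }
set (A := covD gamma (dv gamma)) in *.
set (dA := dv A).
assert (EA : forall r, in_Iv lo hi r -> A r = vadd (dv (dv gamma) r) (vscal (-1) (gamma r))).
{ intros r Hr. unfold A, covD. rewrite lor_sym, E3; auto. }
assert (E4g : forall r, in_Iv lo hi r -> lor (A r) (gamma r) = 0).
{ intros r Hr. rewrite EA, lor_vas, E0, lor_sym, E3; auto. lra. }
assert (E4T : forall r, in_Iv lo hi r -> lor (A r) (dv gamma r) = 0).
{ intros r Hr. rewrite EA, lor_vas, E1, lor_sym, E2; auto. lra. }
assert (E5 : forall r, in_Iv lo hi r -> lor (A r) a = 0).
{ intros r Hr. unfold A. rewrite Hconf; auto. apply conf_a. }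
assert (DAg : forall r, in_Iv lo hi r -> lor (dA r) (gamma r) = 0).
{ intros r Hr. pose proof (dzero lo hi (fun r => lor (A r) (gamma r)) 0 r _ Hr E4g
     (isd_lor _ _ r (DA r Hr) (D1 r Hr))) as H.
  rewrite E4T in H; auto. unfold dA. lra. }
assert (DAT : forall r, in_Iv lo hi r -> lor (dA r) (dv gamma r) = - lor (A r) (A r)).
{ intros r Hr. pose proof (dzero lo hi (fun r => lor (A r) (dv gamma r)) 0 r _ Hr E4T
     (isd_lor _ _ r (DA r Hr) (D2 r Hr))) as H.
  assert (X := f_equal (lor (A r)) (EA r Hr)). rewrite lor_avs, E4g in X; auto.
  unfold dA. lra. }
assert (DAa : forall r, in_Iv lo hi r -> lor (dA r) a = 0).
{ intros r Hr. pose proof (dzero lo hi (fun r => lor (A r) a) 0 r _ Hr E5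
     (isd_lor A (fun _ => a) r (DA r Hr) (difv_const a r))) as H.
  rewrite dv_const, lor_zero in H. unfold dA. lra. }
assert (Kpos : forall r, in_Iv lo hi r -> lor (A r) (A r) > 0).
{ intros r Hr. pose proof (Hcurv r Hr) as H. unfold curvature, tangentT in H.
  destruct (Rle_dec (lor (A r) (A r)) 0) as [Hle|Hle]; [|lra].
  unfold A in Hle. rewrite (sqrt_neg_0 _ Hle) in H. lra. }
assert (Hdet : forall r, in_Iv lo hi r -> det4 (dv gamma r) (A r) (dA r) (gamma r) = 0).
{ intros r Hr.
  assert (Hk : is_derive (fun r => curvature gamma r) r
                 ((lor (dA r) (A r) + lor (A r) (dA r)) / (2 * sqrt (lor (A r) (A r))))).
  { exact (is_derive_sqrt (fun r => lor (A r) (A r)) r _ (isd_lor A A r (DA r Hr) (DA r Hr)) (Kpos r Hr)). }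
  assert (Hc : ex_derive (fun r => / curvature gamma r) r).
  { eexists. apply is_derive_inv; [exact Hk|]. pose proof (Hcurv r Hr); lra. }
  assert (HdvN : dv (normalN gamma) r = vadd (vscal (Derive (fun r => / curvature gamma r) r) (A r))
                        (vscal (/ curvature gamma r) (dA r))).
  { exact (dv_scal (fun r => / curvature gamma r) A r Hc (DA r Hr)). }
  assert (Htor : torsion gamma r = (/ curvature gamma r) * (/ curvature gamma r) * det4 (dv gamma r) (A r) (dA r) (gamma r)).
  { change (torsion gamma r) with (lor (vadd (dv (normalN gamma) r) (vscal (lor (dv (normalN gamma) r) (gamma r)) (gamma r))) (cross (gamma r) (dv gamma r) (normalN gamma r))).
    rewrite HdvN. change (normalN gamma r) with (vscal (/ curvature gamma r) (A r)).
    apply tors_id. }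
  rewrite Htors in Htor; auto.
  pose proof (Hcurv r Hr).
  assert (/ curvature gamma r > 0) by (apply Rinv_0_lt_compat; lra).
  destruct (Rmult_integral _ _ (eq_sym Htor)) as [H1|H1]; auto. nra. }
assert (Hh : forall r, in_Iv lo hi r -> lor (dv gamma r) a = 0).
{ intros r Hr. apply (step_h (gamma r) (dv gamma r) (A r) (dA r) a); auto. }
assert (P1 : forall s, in_Iv lo hi s -> lor a (gamma s) = 0).
{ intros s Hs. pose proof (dzero lo hi (fun r => lor (dv gamma r) a) 0 s _ Hs Hh
     (isd_lor (dv gamma) (fun _ => a) s (D2 s Hs) (difv_const a s))) as H.
  rewrite dv_const, lor_zero in H.
  pose proof (E5 s Hs) as X. rewrite EA, lor_vas in X; auto.
  rewrite lor_sym. lra. }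
split; [exact P1|].
destruct (exists_in lo hi Hlohi) as [s Hs].
apply (final_alg a (gamma s) (dv gamma s) q); auto.
all: try (rewrite lor_sym; auto).
all: try (rewrite <- Hconf; auto; apply Kpos; auto).
Qed.
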